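(* Let $0<\alpha<1$ and $1\le i\le k\le 6$, and let $\omega^{(k,i)}_m$, $m\ge0$, be the convolution weights defined in the context. Then $\sum_{m=0}^{\infty}|\omega^{(k,i)}_m|<\infty$.
   Context: Uniform grid $t_n=n\Delta t$, $\Delta t>0$, $I_j=[t_{j-1},t_j]$. For a function $u$ and integers $m\ge1$, $j$, $q$, let $p^{m}_{j,q}$ be the polynomial of degree at most $m$ interpolating $u$ at $t_{j+q-m-1},\dots,t_{j+q-1}$. For $1\le i\le k\le 6$ and $n\ge k$, let $P^{k}_{i,n}$ be the continuous piecewise polynomial on $[0,t_n]$ equal on $I_j$ to $p^{k-1}_{j,k-j}$ for $1\le j\le k-i$, to $p^{k}_{j,i}$ for $k-i+1\le j\le n-i+1$, and to $p^{k}_{j,n+1-j}$ for $n-i+2\le j\le n$, and set $D^{\alpha}_{k,i}u_n=\frac{1}{\Gamma(1-\alpha)}\int_0^{t_n}(t_n-\xi)^{-\alpha}(P^{k}_{i,n})'(\xi)\,\mathrm{d}\xi$. This is a linear combination of $u_0=u(t_0),\dots,u_n=u(t_n)$; for $k\le j\le n$ the coefficient of $u_j$ in $(\Delta t)^{\alpha}D^{\alpha}_{k,i}u_n$ depends only on $n-j$ and is denoted $\omega^{(k,i)}_{n-j}$; this defines $\omega^{(k,i)}_m$ for all $m\ge 0$. *)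

(* Defs.v *)
From HB Require Import structures.
From mathcomp Require Import all_boot all_order all_algebra.
From mathcomp Require Import all_classical all_reals all_analysis.
Set Implicit Arguments. Unset Strict Implicit. Unset Printing Implicit Defensive.
Import Order.TTheory GRing.Theory Num.Theory.
Import numFieldNormedType.Exports.
Local Open Scope classical_set_scope.
Local Open Scope ring_scope.

Section FracWeights.
Variable R : realType.

Definition Gamma (s : R) : R :=
  Rintegral (@lebesgue_measure R) `]0, +oo[
            (fun x => powR x (s - 1) * expR (- x)).

Definition tgrid (dt : R) (l : nat) : R := l%:R * dt.

Definition interp (dt : R) (u : nat -> R) (s m : nat) : {poly R} :=
  \sum_(a < m.+1)
     u (s + a)%N *: \prod_(b < m.+1 | b != a)
        ((tgrid dt (s + a)%N - tgrid dt (s + b)%N)^-1 *: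
           ('X - (tgrid dt (s + b)%N)%:P)).

(* p^m_{j,q}: interpolates u at t_(j+q-m-1), ..., t_(j+q-1)
   (only used with j+q >= m+1, so the nat subtraction is exact). *)
Definition pjq (dt : R) (u : nat -> R) (m j q : nat) : {poly R} :=
  interp dt u (j + q - m.+1)%N m.

Definition piece (dt : R) (u : nat -> R) (k i n j : nat) : {poly R} :=
  if (j <= k - i)%N then pjq dt u k.-1 j (k - j)
  else if (j <= n - i + 1)%N then pjq dt u k j i
  else pjq dt u k j (n + 1 - j).

Definition Pderiv (dt : R) (u : nat -> R) (k i n : nat) (xi : R) : R :=
  \sum_(1 <= j < n.+1)
     (if (tgrid dt j.-1 < xi) && (xi <= tgrid dt j)
      then (piece dt u k i n j)^`().[xi] else 0).

Definition Dfrac (alpha dt : R) (k i n : nat) (u : nat -> R) : R :=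
  (Gamma (1 - alpha))^-1 *
  Rintegral (@lebesgue_measure R) `[0, tgrid dt n]
    (fun xi => powR (tgrid dt n - xi) (- alpha) * Pderiv dt u k i n xi).

(* omega^{(k,i)}_m : coefficient of u_j in (dt)^alpha D^alpha_{k,i} u_n with
   n - j = m, computed with j = k, n = m + k (coefficient = value of the
   linear functional on the grid delta function at j). *)
Definition omega (alpha dt : R) (k i m : nat) : R :=
  powR dt alpha * Dfrac alpha dt k i (m + k)%N (fun l => (l == k)%:R).

End FracWeights.

(* Main.v *)
Require Import Defs.
From HB Require Import structures.
From mathcomp Require Import all_boot all_order all_algebra.
From mathcomp Require Import all_classical all_reals all_analysis.
From mathcomp Require Import ring lra zify.
Set Implicit Arguments. Unset Strict Implicit. Unset Printing Implicit Defensive.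
Import Order.TTheory GRing.Theory Num.Theory.
Import numFieldNormedType.Exports.
Local Open Scope classical_set_scope.
Local Open Scope ring_scope.

Section S.
Variable R : realType.
Local Notation mu := (@lebesgue_measure R).

Lemma powR_cont (r x : R) : 0 < x -> {for x, continuous (fun y : R => powR y r)}.
Proof.
move=> x0; apply: differentiable_continuous; apply/derivable1_diffP.
by apply: derivable_powR; rewrite in_itv /= andbT.
Qed.

Lemma telescope_bound (a k : R) : 0 < a -> 1 <= k ->
  a * (k + 1) `^ (- a - 1) <= k `^ (- a) - (k + 1) `^ (- a).
Proof.
move=> a0 k1.
have kk : k < k + 1 by rewrite ltrDl.
have [c cin E] : exists2 c, c \in `]k, k + 1[ &
   (k + 1) `^ (- a) - k `^ (- a) = - a * c `^ (- a - 1) * (k + 1 - k).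
  apply: (@MVT R (fun y => y `^ (- a)) (fun x => - a * x `^ (- a - 1)) k (k + 1) kk).
  - move=> x; rewrite in_itv /= => /andP[kx _]; apply: is_derive1_powR; lra.
  - apply: continuous_in_subspaceT => x; rewrite inE /= in_itv /= => /andP[kx _].
    by apply: powR_cont; lra.
rewrite addrAC subrr add0r mulr1 in E.
move: cin; rewrite in_itv /= => /andP[kc c1].
have c0 : 0 < c by lra.
have -> : k `^ (- a) - (k + 1) `^ (- a) = a * c `^ (- a - 1).
  by rewrite -opprB E mulNr opprK.
rewrite ler_pM2l // -opprD !powRN lef_pV2 ?posrE ?powR_gt0 //; last by lra.
by apply: ge0_ler_powR; rewrite ?nnegrE; lra.
Qed.
Definition pv (a : R) (n : nat) : R := n%:R `^ (- a - 1).

Lemma pv_ge0 a n : 0 <= pv a n.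
Proof. exact: powR_ge0. Qed.

Lemma pv_cvg (a : R) : 0 < a -> cvgn (series (pv a)).
Proof.
move=> a0.
have H n : a * \sum_(0 <= k < n) pv a k.+2 <= 1 - (n.+1)%:R `^ (- a).
  elim: n => [|n IH]; first by rewrite big_geq // mulr0 powR1 subrr.
  rewrite big_nat_recr //= mulrDr.
  have h1 : 1 <= (n.+1)%:R :> R by rewrite ler1n.
  have T := @telescope_bound a n.+1%:R a0 h1; rewrite natr1 in T.
  rewrite /pv; lra.
have nd : nondecreasing_seq (series (pv a)).
  by apply: nondecreasing_series => *; apply: pv_ge0.
have Hb n : series (pv a) n <= pv a 0 + pv a 1 + a^-1.
  apply: (@le_trans _ _ (series (pv a) n.+2)).
    by apply: nd; rewrite leqW.
  rewrite /series /=.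
  rewrite big_nat_recl // big_nat_recl // addrA lerD2l.
  rewrite -(ler_pM2l a0) mulfV ?gt_eqF //; have := H n.
  have := @powR_ge0 R (n.+1)%:R (- a); lra.
apply: nondecreasing_is_cvgn => //.
by exists (pv a 0 + pv a 1 + a^-1) => _ [n _ <-]; apply: Hb.
Qed.
Lemma cvg_by_pv (a C : R) (N : nat) (f : nat -> R) : 0 < a ->
  (forall n, 0 <= f n) -> (forall n, (N <= n)%N -> f n <= C * pv a n) ->
  cvgn (series f).
Proof.
move=> a0 f0 fC.
pose g n := if (n < N)%N then f n else C * pv a n.
apply: (@series_le_cvg R f g) => //.
- move=> n; rewrite /g; case: ltnP => // Nn; exact: le_trans (f0 n) (fC n Nn).
- move=> n; rewrite /g; case: ltnP => // Nn; exact: fC.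
rewrite -(@is_cvg_series_restrict N).
have -> : (fun n => \sum_(N <= k < n) g k) = (fun n => \sum_(N <= k < n) (C *: pv a) k).
  apply/funext => n; apply: eq_big_nat => k /andP[Nk _].
  by rewrite /g ltnNge Nk.
rewrite (@is_cvg_series_restrict N).
exact/is_cvg_seriesZ/pv_cvg.
Qed.
Lemma tgrid_neq (dt : R) p q : dt != 0 -> p <> q -> tgrid dt p - tgrid dt q != 0.
Proof.
move=> dt0 pq; rewrite subr_eq0; apply/eqP => /mulIf => /(_ dt0) /eqP.
by rewrite eqr_nat => /eqP.
Qed.

Lemma interp_node (dt : R) u s m c : dt != 0 -> (c <= m)%N ->
  (interp dt u s m).[tgrid dt (s + c)] = u (s + c)%N.
Proof.
move=> dt0 cm.
have cm' : (c < m.+1)%N by [].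
rewrite /interp horner_sum (bigD1 (Ordinal cm')) //=.
rewrite [X in _ + X]big1 ?addr0.
  rewrite hornerZ horner_prod [X in _ * X]big1 ?mulr1 // => b bc.
  rewrite hornerZ hornerXsubC mulVf // tgrid_neq // => /addnI E.
  by move: bc; rewrite -val_eqE /= E eqxx.
move=> a ac; rewrite hornerZ horner_prod.
have ca : Ordinal cm' != a by rewrite eq_sym.
rewrite (bigD1 (Ordinal cm')) //= hornerZ hornerXsubC subrr mulr0 mul0r.
by rewrite mulr0.
Qed.
Lemma Rintegral_sum_nat (D : set R) (F : nat -> R -> R) a b : measurable D ->
  (forall j, (a <= j < b)%N -> mu.-integrable D (EFin \o F j)) ->
  mu.-integrable D (EFin \o (fun x => \sum_(a <= j < b) F j x)) /\
  \int[mu]_(x in D) (\sum_(a <= j < b) F j x) = \sum_(a <= j < b) \int[mu]_(x in D) F j x.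
Proof.
move=> mD; elim: b => [|b IH] HF.
  have E : (fun x => \sum_(a <= j < 0) F j x) = fun=> 0.
    by apply/funext => x; rewrite big_geq.
  rewrite E big_geq //; split; first exact: integrable0.
  by rewrite Rintegral_cst // mul0r.
have [ab|ba] := leqP a b; last first.
  have E : (fun x => \sum_(a <= j < b.+1) F j x) = fun=> 0.
    by apply/funext => x; rewrite big_geq.
  rewrite E big_geq //; split; first exact: integrable0.
  by rewrite Rintegral_cst // mul0r.
have [IH1 IH2] : mu.-integrable D (EFin \o (fun x => \sum_(a <= j < b) F j x)) /\
  \int[mu]_(x in D) (\sum_(a <= j < b) F j x) = \sum_(a <= j < b) \int[mu]_(x in D) F j x.
  by apply: IH => j /andP[aj jb]; apply: HF; rewrite aj ltnS ltnW.
have Fb : mu.-integrable D (EFin \o F b) by apply: HF; rewrite ab ltnS leqnn.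
have E : (fun x => \sum_(a <= j < b.+1) F j x) =
  (fun x => \sum_(a <= j < b) F j x + F b x).
  by apply/funext => x; rewrite big_nat_recr.
rewrite E big_nat_recr //=; split.
  have -> : EFin \o (fun x => \sum_(a <= j < b) F j x + F b x) =
    (EFin \o (fun x => \sum_(a <= j < b) F j x)) \+ (EFin \o F b).
    by apply/funext => x /=; rewrite EFinD.
  exact: integrableD.
by rewrite RintegralD // IH2.
Qed.

Lemma cont_int (f : R -> R) a b : {within `[a, b], continuous f} ->
  mu.-integrable `[a, b] (EFin \o f).
Proof.
by move=> cf; apply: continuous_compact_integrable => //; exact: segment_compact.
Qed.

Lemma ind_int (f : R -> R) (lo hi a b : R) : lo <= a -> b <= hi ->
  {within `[a, b], continuous f} ->
  mu.-integrable `[lo, hi] (EFin \o (fun x => if (a < x) && (x <= b) then f x else 0)) /\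
  \int[mu]_(x in `[lo, hi]) (if (a < x) && (x <= b) then f x else 0)
    = \int[mu]_(x in `[a, b]) f x.
Proof.
move=> la bh cf.
have E : (fun x => if (a < x) && (x <= b) then f x else 0) = f \_ `]a, b].
  apply/funext => x; rewrite patchE; congr (if _ then _ else _).
  by apply/idP/idP; rewrite ?in_setE /= in_itv.
have sub : `]a, b] `<=` `[lo, hi].
  move=> x /=; rewrite !in_itv /= => /andP[ax xb]; apply/andP; split; lra.
have I1 : mu.-integrable `]a, b] (EFin \o f).
  by apply: (integrableS _ _ _ (cont_int cf)) => //; apply: subset_itv_oc_cc.
rewrite E; split.
  by rewrite -restrict_EFin; apply/integrable_restrict => //; rewrite setIidr.
by rewrite -Rintegral_mkcondr setIidr // Rintegral_itv_obnd_cbnd.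
Qed.

Lemma w_cont (T r x : R) : x < T -> {for x, continuous (fun y => (T - y) `^ r)}.
Proof.
move=> xT.
apply: (@continuous_comp _ _ _ (fun y => T - y) (fun z => z `^ r)).
  by apply: (@continuousB _ _ _ (cst T) id); [exact: cst_continuous|].
by apply: powR_cont; rewrite subr_gt0.
Qed.

Lemma wq_cont (T r a b : R) (p : {poly R}) : b < T ->
  {within `[a, b], continuous (fun y => (T - y) `^ r * p.[y])}.
Proof.
move=> bT; apply: continuous_in_subspaceT => x; rewrite inE /= in_itv /= => /andP[_ xb].
apply: (@continuousM _ _ (fun y => (T - y) `^ r) (horner p)).
  by apply: w_cont; lra.
exact: continuous_horner.
Qed.

Lemma wq_cont2 (T r a b c : R) (p : {poly R}) : b < T ->
  {within `[a, b], continuous (fun y => `|(T - y) `^ r - c| * `|p.[y]|)}.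
Proof.
move=> bT; apply: continuous_in_subspaceT => x; rewrite inE /= in_itv /= => /andP[_ xb].
apply: (@continuousM _ _ (fun y => `|(T - y) `^ r - c|) (fun y => `|p.[y]|)).
  apply: (@continuous_comp _ _ _ (fun y => (T - y) `^ r - c) (Num.norm)); last first.
    exact: norm_continuous.
  apply: (@continuousB _ _ _ (fun y => (T - y) `^ r) (cst c)); last exact: cst_continuous.
  by apply: w_cont; lra.
apply: (@continuous_comp _ _ _ (horner p) (Num.norm)); last exact: norm_continuous.
exact: continuous_horner.
Qed.

Lemma q_cont2 (d a b : R) (p : {poly R}) :
  {within `[a, b], continuous (fun y => d * `|p.[y]|)}.
Proof.
apply: continuous_subspaceT => x.
apply: (@continuousM _ _ (cst d) (fun y => `|p.[y]|)); first exact: cst_continuous.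
apply: (@continuous_comp _ _ _ (horner p) (Num.norm)); last exact: norm_continuous.
exact: continuous_horner.
Qed.

Lemma q_cont (a b : R) (p : {poly R}) : {within `[a, b], continuous (horner p)}.
Proof. by apply: continuous_subspaceT; exact: continuous_horner. Qed.

Lemma ftc_poly (p : {poly R}) a b : a < b ->
  \int[mu]_(x in `[a, b]) p^`().[x] = p.[b] - p.[a].
Proof.
move=> ab.
have := @continuous_FTC2 R (horner p^`()) (horner p) a b ab (@q_cont a b p^`()).
move=> /(_ _ _) H; rewrite /Rintegral H //.
- split.
  + by move=> x _; exact: derivable_horner.
  + by apply: cvg_at_right_filter; exact: continuous_horner.
  + by apply: cvg_at_left_filter; exact: continuous_horner.
- by move=> x _; rewrite derivE.
Qed.

Lemma w_bound (al T x b : R) : 0 < al < 1 -> 0 <= x <= b -> 2 * b <= T -> 0 < T ->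
  `|(T - x) `^ (- al) - T `^ (- al)| <= 2 * b * T `^ (- al - 1).
Proof.
move=> /andP[a0 a1] /andP[x0 xb] bT T0.
set y := (T - x) / T.
have y0 : 0 < y by rewrite /y divr_gt0 //; lra.
have y1 : y <= 1 by rewrite /y ler_pdivrMr // mul1r; lra.
have ET : T - x = T * y by rewrite /y mulrC divfK ?gt_eqF.
have Ez : (T - x) `^ (- al) = T `^ (- al) * (y `^ al)^-1.
  rewrite ET powRM ?powRN //; exact: ltW.
set P := T `^ (- al).
have P0 : 0 < P by rewrite powR_gt0.
have z1 : y `^ al <= 1.
  by rewrite -(powRr0 y); apply: ger_powR; [rewrite y0 y1|exact: ltW].
have zy : y <= y `^ al by apply: ger1_powR; [rewrite y0 y1|exact: ltW].
have z0 : 0 < y `^ al by rewrite powR_gt0.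
have E1 : T `^ (- al - 1) = P / T.
  rewrite powRB; last by rewrite (gt_eqF T0) implybT.
  by rewrite powRr1 // ltW.
rewrite Ez E1 -[X in _ - X]mulr1 -mulrBr normrM ger0_norm ?(ltW P0) //.
have Hz : `|(y `^ al)^-1 - 1| <= y^-1 - 1.
  have h1 : (y `^ al)^-1 <= y^-1 by rewrite lef_pV2 ?posrE.
  have h2 : 1 <= (y `^ al)^-1 by rewrite -invr1 lef_pV2 ?posrE.
  rewrite ger0_norm; lra.
have Hy : y^-1 - 1 <= 2 * b / T.
  have Tx : 0 < T - x by lra.
  have -> : y^-1 - 1 = x / (T - x).
    by rewrite /y invf_div; field; rewrite gt_eqF.
  rewrite ler_pdivrMr // mulrAC ler_pdivlMr //; nra.
have -> : 2 * b * (P / T) = P * (2 * b / T) by rewrite /P; field; rewrite gt_eqF.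
rewrite -/P ler_pM2l //; exact: le_trans Hz Hy.
Qed.

Lemma piece_bound (al T a b bb : R) (p : {poly R}) : 0 < al < 1 -> 0 <= a ->
  a < b -> b <= bb -> 2 * bb <= T -> 0 < T ->
  `| \int[mu]_(x in `[a, b]) ((T - x) `^ (- al) * p.[x])
     - T `^ (- al) * \int[mu]_(x in `[a, b]) p.[x] |
  <= (2 * bb * T `^ (- al - 1)) * \int[mu]_(x in `[a, b]) `|p.[x]|.
Proof.
move=> alr a0 ab bbb bbT T0.
have bT : b < T by lra.
set c := T `^ (- al).
set d := 2 * bb * T `^ (- al - 1).
have cw x : a <= x <= b -> {for x, continuous (fun y => (T - y) `^ (- al))}.
  by move=> /andP[_ xb]; apply: w_cont; lra.
have cp x : {for x, continuous (horner p)} by exact: continuous_horner.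
have ccp x : {for x, continuous (fun y => c * p.[y])}.
  by apply: (@continuousM _ _ (cst c) (horner p)); [exact: cst_continuous|].
have cwp x : a <= x <= b -> {for x, continuous (fun y => (T - y) `^ (- al) * p.[y])}.
  by move=> H; apply: (@continuousM _ _ (fun y => (T - y) `^ (- al)) (horner p)); [exact: cw|].
have cdiff x : a <= x <= b ->
    {for x, continuous (fun y => (T - y) `^ (- al) * p.[y] - c * p.[y])}.
  move=> H; apply: (@continuousB _ _ _ (fun y => (T - y) `^ (- al) * p.[y])
     (fun y => c * p.[y])); [exact: cwp|exact: ccp].
have cab f : (forall x, a <= x <= b -> {for x, continuous f}) ->
    mu.-integrable `[a, b] (EFin \o f).
  move=> H; apply: cont_int; apply: continuous_in_subspaceT => x.
  by rewrite inE /= in_itv /=; exact: H.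
have Ip : mu.-integrable `[a, b] (EFin \o horner p) by apply: cab.
have Icp : mu.-integrable `[a, b] (EFin \o (fun y => c * p.[y])) by apply: cab.
have Iwp : mu.-integrable `[a, b] (EFin \o (fun y => (T - y) `^ (- al) * p.[y])).
  by apply: cab.
have Idf : mu.-integrable `[a, b]
    (EFin \o (fun y => (T - y) `^ (- al) * p.[y] - c * p.[y])) by apply: cab.
have Iadf : mu.-integrable `[a, b]
    (EFin \o (fun y => `|(T - y) `^ (- al) * p.[y] - c * p.[y]|)).
  apply: cab => x H.
  apply: (@continuous_comp _ _ _ (fun y => (T - y) `^ (- al) * p.[y] - c * p.[y]) Num.norm).
    exact: cdiff.
  exact: norm_continuous.
have Idp : mu.-integrable `[a, b] (EFin \o (fun y => d * `|p.[y]|)).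
  apply: cab => x H.
  apply: (@continuousM _ _ (cst d) (fun y => `|p.[y]|)); first exact: cst_continuous.
  apply: (@continuous_comp _ _ _ (horner p) Num.norm); last exact: norm_continuous.
  exact: cp.
rewrite -RintegralZl // -RintegralB //.
apply: le_trans (le_normr_Rintegral _ _) _ => //.
have Iap : mu.-integrable `[a, b] (EFin \o (fun y => `|p.[y]|)).
  apply: cab => x H.
  apply: (@continuous_comp _ _ _ (horner p) Num.norm); last exact: norm_continuous.
  exact: cp.
rewrite -RintegralZl //; apply: le_Rintegral => // x.
rewrite /= in_itv /= => /andP[ax xb].
rewrite -mulrBl normrM ler_wpM2r //.
by apply: w_bound => //; apply/andP; split; lra.
Qed.

Lemma interp_zero (dt : R) u s m : (forall a, (a <= m)%N -> u (s + a)%N = 0) ->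
  interp dt u s m = 0.
Proof.
move=> H; rewrite /interp big1 // => a _; rewrite H ?scale0r //.
by rewrite -ltnS ltn_ord.
Qed.

Variables (k i : nat).
Hypothesis i1 : (1 <= i)%N.
Hypothesis ik : (i <= k)%N.
Definition ud (l : nat) : R := (l == k)%:R.
Definition BB := k.*2.+1.
Definition N1 := (3 * k).+1.

Lemma piece_far dt n j : (N1 <= n)%N -> (BB < j)%N -> (j <= n)%N ->
  piece dt ud k i n j = 0.
Proof.
rewrite /N1 /BB => Hn Hj jn; rewrite /piece.
have -> : (j <= k - i)%N = false by apply/negbTE; rewrite -ltnNge; lia.
rewrite /pjq; case: ifP => _; apply: interp_zero => a _; rewrite /ud;
  case: eqP => // E; lia.
Qed.

Lemma piece_stable dt n j : (N1 <= n)%N -> (j <= BB)%N ->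
  piece dt ud k i n j = piece dt ud k i N1 j.
Proof.
rewrite /N1 /BB => Hn Hj; rewrite /piece; case: ifP => // _.
by rewrite ifT ?ifT //; lia.
Qed.
Lemma piece_nodes dt j c : dt != 0 -> (1 <= j <= BB)%N -> (j.-1 <= c <= j)%N ->
  (piece dt ud k i N1 j).[tgrid dt c] = ud c.
Proof.
rewrite /BB /N1 => dt0 Hj Hc; rewrite /piece /pjq; case: ifP => H1.
  have E : c = (j + (k - j) - k.-1.+1 + (c - (j + (k - j) - k.-1.+1)))%N by lia.
  by rewrite E interp_node //; lia.
rewrite ifT; last by lia.
have E : c = (j + i - k.+1 + (c - (j + i - k.+1)))%N by lia.
by rewrite E interp_node //; lia.
Qed.
Definition cnd (dt xi : R) (j : nat) := (tgrid dt j.-1 < xi) && (xi <= tgrid dt j).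

Definition G dt xi := \sum_(1 <= j < BB.+1)
  (if cnd dt xi j then (piece dt ud k i N1 j)^`().[xi] else 0).

Lemma Pderiv_eq dt n xi : (N1 <= n)%N -> Pderiv dt ud k i n xi = G dt xi.
Proof.
move=> Hn; rewrite /Pderiv /G (big_cat_nat _ (n := BB.+1)) //=; last first.
  by rewrite /N1 /BB in Hn *; lia.
rewrite [X in _ + X]big_nat_cond [X in _ + X]big1 ?addr0.
  apply: eq_big_nat => j /andP[_ Hj].
  by rewrite piece_stable.
move=> j /andP[/andP[Hj Hjn] _].
by rewrite piece_far // deriv0 horner0; case: ifP.
Qed.
Lemma tgrid_ge0 (dt : R) p : 0 < dt -> 0 <= tgrid dt p.
Proof. by move=> dt0; rewrite /tgrid mulr_ge0 // ltW. Qed.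

Lemma tgrid_le (dt : R) p q : 0 < dt -> (p <= q)%N -> tgrid dt p <= tgrid dt q.
Proof. by move=> dt0 pq; rewrite /tgrid ler_pM2r // ler_nat. Qed.

Lemma tgrid_lt (dt : R) p q : 0 < dt -> (p < q)%N -> tgrid dt p < tgrid dt q.
Proof. by move=> dt0 pq; rewrite /tgrid ltr_pM2r // ltr_nat. Qed.

Lemma k1 : (1 <= k)%N.
Proof. exact: leq_trans i1 ik. Qed.

Lemma sumq0 (dt : R) : 0 < dt ->
  \sum_(1 <= j < BB.+1) \int[mu]_(x in `[tgrid dt j.-1, tgrid dt j])
      (piece dt ud k i N1 j)^`().[x] = 0.
Proof.
move=> dt0.
rewrite (@telescope_sumr_eq _ 1 BB.+1 (fun j => ud j.-1)) //=.
  rewrite /ud /BB; have := k1; case: eqP => [|_]; first lia.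
  by case: eqP => [|_]; [lia | rewrite subrr].
move=> j /andP[j1 jB]; rewrite ftc_poly; last by apply: tgrid_lt => //; lia.
rewrite !piece_nodes ?gt_eqF //; try lia.
Qed.
Lemma J_eq (dt al : R) n : 0 < dt -> (N1 <= n)%N ->
  \int[mu]_(x in `[0, tgrid dt n]) ((tgrid dt n - x) `^ (- al) * Pderiv dt ud k i n x)
  = \sum_(1 <= j < BB.+1) \int[mu]_(x in `[tgrid dt j.-1, tgrid dt j])
      ((tgrid dt n - x) `^ (- al) * (piece dt ud k i N1 j)^`().[x]).
Proof.
move=> dt0 Hn.
pose F j x := if (tgrid dt j.-1 < x) && (x <= tgrid dt j) then
   (tgrid dt n - x) `^ (- al) * (piece dt ud k i N1 j)^`().[x] else 0.
have HF j : (1 <= j < BB.+1)%N ->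
  mu.-integrable `[0, tgrid dt n] (EFin \o F j) /\
  \int[mu]_(x in `[0, tgrid dt n]) F j x = \int[mu]_(x in `[tgrid dt j.-1, tgrid dt j])
      ((tgrid dt n - x) `^ (- al) * (piece dt ud k i N1 j)^`().[x]).
  move=> /andP[j1 jB]; apply: ind_int.
  - exact: tgrid_ge0.
  - by apply: tgrid_le => //; rewrite /N1 /BB in Hn jB *; lia.
  - by apply: wq_cont; apply: tgrid_lt => //; rewrite /N1 /BB in Hn jB *; lia.
have -> : \int[mu]_(x in `[0, tgrid dt n]) ((tgrid dt n - x) `^ (- al) * Pderiv dt ud k i n x)
   = \int[mu]_(x in `[0, tgrid dt n]) (\sum_(1 <= j < BB.+1) F j x).
  apply: eq_Rintegral => x _; rewrite Pderiv_eq // /G mulr_sumr; apply: eq_bigr => j _.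
  by rewrite /F /cnd; case: ifP; rewrite ?mulr0.
have [_ ->] := @Rintegral_sum_nat _ F 1 BB.+1 (measurable_itv _) (fun j Hj => (HF j Hj).1).
by apply: eq_big_nat => j Hj; exact: (HF j Hj).2.
Qed.
Lemma pv_anti (a : R) m n : 0 < a -> (1 <= m)%N -> (m <= n)%N -> pv a n <= pv a m.
Proof.
move=> a0 m1 mn; rewrite /pv -opprD !powRN lef_pV2 ?posrE ?powR_gt0 ?ltr0n //; try lia.
by apply: ge0_ler_powR; rewrite ?nnegrE ?ler_nat //; lra.
Qed.

Lemma omega_bound (al dt : R) : 0 < al < 1 -> 0 < dt ->
  exists C, forall m, (N1 + BB.*2 <= m)%N -> `|omega al dt k i m| <= C * pv al m.
Proof.
move=> alr dt0.
have al0 : 0 < al by case/andP: alr.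
pose q j := (piece dt ud k i N1 j)^`().
pose K := \sum_(1 <= j < BB.+1) \int[mu]_(x in `[tgrid dt j.-1, tgrid dt j]) `|(q j).[x]|.
have K0 : 0 <= K by apply: sumr_ge0 => j _; apply: Rintegral_ge0 => x _.
exists (`|dt `^ al| * `|(Gamma (1 - al))^-1| * (2 * BB%:R * dt * dt `^ (- al - 1)) * K).
move=> m Hm.
set n := (m + k)%N.
have Hn : (N1 <= n)%N by rewrite /n; lia.
have HBn : (BB.*2 <= n)%N by rewrite /n; lia.
set T := tgrid dt n.
have T0 : 0 < T by rewrite /T /tgrid mulr_gt0 // ltr0n; rewrite /N1 in Hn; lia.
set c := T `^ (- al).
set d := 2 * tgrid dt BB * T `^ (- al - 1).
have bbT : 2 * tgrid dt BB <= T.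
  by rewrite /T /tgrid mulrA -natrM ler_pM2r // ler_nat; lia.
rewrite /omega /Dfrac -/ud -/T.
rewrite J_eq //.
set A := \sum_(1 <= j < BB.+1) _.
have HA : `|A| <= d * K.
  have -> : A = \sum_(1 <= j < BB.+1) (\int[mu]_(x in `[tgrid dt j.-1, tgrid dt j])
      ((T - x) `^ (- al) * (q j).[x]) - c * \int[mu]_(x in `[tgrid dt j.-1, tgrid dt j]) (q j).[x]).
    by rewrite sumrB -mulr_sumr sumq0 // mulr0 subr0.
  rewrite /K mulr_sumr; apply: le_trans (ler_norm_sum _ _ _) _.
  apply: ler_sum_nat => j /andP[j1 jB].
  apply: piece_bound => //.
  - exact: tgrid_ge0.
  - by apply: tgrid_lt => //; lia.
  - by apply: tgrid_le => //; rewrite /BB in jB *; lia.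
have Ed : d = 2 * BB%:R * dt * dt `^ (- al - 1) * n%:R `^ (- al - 1).
  rewrite /d /T /tgrid powRM ?ler0n ?(ltW dt0) //.
  by ring.
have pvn : n%:R `^ (- al - 1) <= pv al m.
  by apply: pv_anti => //; rewrite /n ?leq_addr //; rewrite /N1 /BB in Hm; lia.
rewrite normrM normrM mulrA.
set C0 := `|dt `^ al| * `|(Gamma (1 - al))^-1|.
have C00 : 0 <= C0 by rewrite /C0 mulr_ge0.
have E2 : C0 * (2 * BB%:R * dt * dt `^ (- al - 1)) * K * pv al m =
   C0 * ((2 * BB%:R * dt * dt `^ (- al - 1)) * pv al m * K) by ring.
rewrite E2; apply: ler_wpM2l => //.
apply: le_trans HA _; rewrite Ed ler_wpM2r // ler_wpM2l //.
by rewrite mulr_ge0 ?powR_ge0 // mulr_ge0 ?(ltW dt0) // mulr_ge0 ?ler0n.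
Qed.
End S.

Theorem lemma3p5 (R : realType) (alpha dt : R) (k i : nat) :
  0 < alpha < 1 -> 0 < dt -> (1 <= i)%N -> (i <= k)%N -> (k <= 6)%N ->
  cvgn (series (fun m : nat => `|omega alpha dt k i m|)).
Proof.
move=> alr dt0 i1 ik _.
have [C HC] := @omega_bound R k i i1 ik alpha dt alr dt0.
have al0 : 0 < alpha by case/andP: alr.
exact: (@cvg_by_pv R alpha C _ _ al0 (fun m => normr_ge0 _) HC).
Qed.
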